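(* In the setting below, $\mathbb E\,S(\widetilde a)\le(8+16C_G)\,\mathbb E\,S(a)$.
   Context: Let $n,N\in\mathbb N$, $I=\{1,\dots,n\}$, $J=\{1,\dots,N\}$, $G$ a nonempty finite set of maps $I\to J$, $\mathbb P$ the normalized counting measure on $G$ ($\mathbb P(E)=|E|/|G|$) and $\mathbb E$ its expectation. Assume there is a constant $C_G\ge1$ such that for all $i\in I,j\in J$, $\mathbb P(g(i)=j)=1/N$, and for all pairs $(i_1,j_1)\ne(i_2,j_2)$ in $I\times J$, $\mathbb P(g(i_1)=j_1,g(i_2)=j_2)\le C_G/N^2$. Fix an integer $1\le\ell\le n$ and a matrix $a\in\mathbb R^{n\times N}$ with non-negative entries, and let $h:\{1,\dots,nN\}\to I\times J$ be a bijection with $a(h(j))\ge a(h(j+1))$ for $1\le j<\ell N$ and $a(h(j))=0$ for $\ell N<j\le nN$ (for a matrix $b$, $b(i,j)=b_{ij}$). For such $a$, let $\widetilde a$ be the matrix with $\widetilde a(h(j))=\big(\frac1{\ell N}\sum_{i=1}^{\ell N}a(h(i))\big)\mathbb 1_{\{1,\dots,\ell N\}}(j)$ for $1\le j\le nN$. For a non-negative matrix $b$ and $g\in G$ let $S(b)(g)=\sum_{k=1}^{\ell}S_k(b)(g)$, where $S_k(b)(g)$ is the $k$-th largest (with multiplicity) of the numbers $b_{1g(1)},\dots,b_{ng(n)}$. *)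

(* Defs.v *)
From HB Require Import structures.
From mathcomp Require Import all_boot all_order all_algebra.
Set Implicit Arguments. Unset Strict Implicit. Unset Printing Implicit Defensive.
Import Order.TTheory GRing.Theory Num.Theory.
Local Open Scope ring_scope.

(* Index sets I = {1..n}, J = {1..N} are represented (0-based) by 'I_n, 'I_N;
   maps I -> J are finite functions {ffun 'I_n -> 'I_N}. *)

Definition topsum (R : realFieldType) (l : nat) (s : seq R) : R :=
  \sum_(x <- take l (sort (fun x y : R => y <= x) s)) x.

Definition Sfun (R : realFieldType) (n N l : nat) (b : 'M[R]_(n, N))
    (g : {ffun 'I_n -> 'I_N}) : R :=
  topsum l [seq b i (g i) | i <- enum 'I_n].

Definition Exp (R : realFieldType) (n N : nat) (G : {set {ffun 'I_n -> 'I_N}})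
    (f : {ffun 'I_n -> 'I_N} -> R) : R :=
  (\sum_(g in G) f g) / #|G|%:R.

Definition Prob (R : realFieldType) (n N : nat) (G : {set {ffun 'I_n -> 'I_N}})
    (E : pred {ffun 'I_n -> 'I_N}) : R :=
  #|[set g in G | E g]|%:R / #|G|%:R.

(* Main.v *)
Require Import Defs.
From HB Require Import structures.
From mathcomp Require Import all_boot all_order all_algebra.
From mathcomp Require Import ring lra.
Import Order.TTheory GRing.Theory Num.Theory.
Local Open Scope ring_scope.

Section L.
Set Implicit Arguments. Unset Strict Implicit.
Variable R : realFieldType.
Definition geR := fun x y : R => y <= x.

Lemma geR_trans : transitive geR.
Proof. by move=> x y z; rewrite /geR => h1 h2; apply: le_trans h2 h1. Qed.
Lemma geR_total : total geR.
Proof. by move=> x y; rewrite /geR le_total. Qed.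

Lemma sorted_split (y : seq R) k x w : sorted geR y ->
  x \in take k y -> w \in drop k y -> w <= x.
Proof.
rewrite (sorted_pairwise geR_trans) -{1}(cat_take_drop k y) pairwise_cat.
by case/and3P => /allrelP H _ _ hx hw; apply: H.
Qed.

Lemma sum_ge0_seq (s : seq R) : all (fun x => 0 <= x) s -> 0 <= \sum_(x <- s) x.
Proof.
move=> /allP H; rewrite big_seq; apply: sumr_ge0 => x /H //.
Qed.

Lemma sum_const_seq (s : seq R) (c : R) : \sum_(x <- s) c = c *+ size s.
Proof. by elim: s => [|x s IH]; rewrite ?big_nil // big_cons IH mulrS. Qed.

Lemma step2 (y : seq R) l m : sorted geR y -> all (fun x => 0 <= x) y -> (l <= m)%N ->
  l%:R * \sum_(x <- take m y) x <= m%:R * \sum_(x <- take l y) x.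
Proof.
move=> Hs Hp Hlm.
have -> : m = (l + (m - l))%N by rewrite subnKC.
rewrite takeD big_cat /= natrD mulrDl mulrDr lerD2l.
set A := take l y; set W := take (m - l) (drop l y).
have HA : 0 <= \sum_(x <- A) x.
  by apply: sum_ge0_seq; apply/allP => x /mem_take /(allP Hp).
case: (ltnP (size y) l) => Hsz.
  rewrite /W drop_oversize ?(ltnW Hsz) //= big_nil mulr0.
  by apply: mulr_ge0.
have sA : size A = l by rewrite /A size_take_min; apply/minn_idPl.
have sW : (size W <= m - l)%N by rewrite /W size_take_min geq_minl.
have key : \sum_(x <- A) \sum_(w <- W) w <= \sum_(x <- A) \sum_(w <- W) x.
  rewrite big_seq_cond [X in _ <= X]big_seq_cond; apply: ler_sum => x /andP [hx _].
  rewrite big_seq_cond [X in _ <= X]big_seq_cond; apply: ler_sum => w /andP [hw _].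
  by apply: (sorted_split Hs hx); apply: mem_take hw.
move: key; rewrite sum_const_seq.
under [X in _ <= X -> _]eq_bigr do rewrite sum_const_seq.
rewrite sumrMnl sA => key.
have key2 : l%:R * \sum_(w <- W) w <= (size W)%:R * \sum_(x <- A) x by rewrite !mulr_natl.
apply: (le_trans key2); apply: ler_wpM2r => //; rewrite ler_nat //.
Qed.

Lemma step1 (y : seq R) m : sorted geR y -> all (fun x => 0 <= x) y ->
  (count (fun x : R => (0 < x)%R) y <= m)%N ->
  \sum_(x <- take m y) x = \sum_(x <- y) x.
Proof.
move=> Hs Hp Hc.
rewrite -{2}(cat_take_drop m y) big_cat /=.
suff -> : \sum_(x <- drop m y) x = 0 by rewrite addr0.
rewrite big_seq; apply: big1 => w hw.
have w0 : 0 <= w by apply: (allP Hp); apply: mem_drop hw.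
apply/eqP; rewrite eq_le w0 andbT; rewrite leNgt; apply/negP => wpos.
have Hsz : (m < size y)%N.
  rewrite ltnNge; apply/negP => H; move: hw; by rewrite drop_oversize.
have c1 : count (fun x : R => (0 < x)%R) (take m y) = m.
  have sz : size (take m y) = m by rewrite size_take Hsz.
  rewrite -[RHS]sz; apply/eqP; rewrite -all_count; apply/allP => x hx.
  by apply: lt_le_trans wpos (sorted_split Hs hx hw).
have c2 : (0 < count (fun x : R => (0 < x)%R) (drop m y))%N.
  by rewrite -has_count; apply/hasP; exists w.
move: Hc; rewrite -{1}(cat_take_drop m y) count_cat c1.
by rewrite leqNgt -{1}(addn0 m) ltn_add2l c2.
Qed.

Lemma topsum_ub l (s : seq R) : all (fun x => 0 <= x) s -> topsum l s <= \sum_(x <- s) x.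
Proof.
move=> Hp; rewrite /topsum.
have -> : \sum_(x <- s) x = \sum_(x <- sort geR s) x by apply: perm_big; rewrite perm_sym perm_sort.
rewrite -{2}(cat_take_drop l (sort geR s)) big_cat /= lerDl.
apply: sum_ge0_seq; apply/allP => x /mem_drop; rewrite mem_sort; apply: (allP Hp).
Qed.

Lemma topsum_lb l z (s : seq R) : all (fun x => 0 <= x) s ->
  (count (fun x : R => (0 < x)%R) s <= z)%N ->
  l%:R * \sum_(x <- s) x <= (maxn l z)%:R * topsum l s.
Proof.
move=> Hp Hc; rewrite /topsum.
have Hs : sorted geR (sort geR s) by apply: sort_sorted; apply: geR_total.
have Hp' : all (fun x => 0 <= x) (sort geR s) by rewrite all_sort.
have -> : \sum_(x <- s) x = \sum_(x <- sort geR s) x by apply: perm_big; rewrite perm_sym perm_sort.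
rewrite -(@step1 (sort geR s) (maxn l z)) //; last first.
  by rewrite count_sort; apply: leq_trans Hc (leq_maxr _ _).
by apply: step2 => //; apply: leq_maxl.
Qed.

Lemma sum_ind (T : finType) (A : {set T}) (P : pred T) :
  \sum_(g in A) ((P g)%:R : R) = #|[set g in A | P g]|%:R.
Proof.
rewrite -sum1_card natr_sum [LHS]big_mkcond [RHS]big_mkcond /=.
apply: eq_bigr => g _; rewrite inE; by case: (g \in A); case: (P g).
Qed.

Lemma delta_sum (N : nat) (f : 'I_N -> R) (x : 'I_N) :
  f x = \sum_j f j * (x == j)%:R.
Proof.
rewrite (bigD1 x) //= eqxx mulr1 big1 ?addr0 // => j /negbTE.
by rewrite eq_sym => ->; rewrite mulr0.
Qed.

Lemma count_enum_sum n (P : pred 'I_n) : (count P (enum 'I_n))%:R = \sum_i ((P i)%:R : R).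
Proof.
rewrite -sum1_count big_mkcond big_enum /= natr_sum.
apply: eq_bigr => i _. by case: (P i).
Qed.

Lemma sum_map_enum n (F : 'I_n -> R) : \sum_(x <- [seq F i | i <- enum 'I_n]) x = \sum_i F i.
Proof. by rewrite big_map big_enum. Qed.

End L.
Unset Implicit Arguments.

Theorem lemma3p5 (R : realFieldType) (n N : nat)
    (G : {set {ffun 'I_n -> 'I_N}}) (CG : R)
    (l : nat) (a atil : 'M[R]_(n, N)) (h : 'I_(n * N) -> 'I_n * 'I_N) :
  G != set0 ->
  1 <= CG ->
  (forall (i : 'I_n) (j : 'I_N),
      Prob R G (fun g => g i == j) = 1 / N%:R) ->
  (forall (i1 i2 : 'I_n) (j1 j2 : 'I_N), (i1, j1) != (i2, j2) ->
      Prob R G (fun g => (g i1 == j1) && (g i2 == j2)) <= CG / (N%:R ^+ 2)) ->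
  (1 <= l)%N -> (l <= n)%N ->
  (forall (i : 'I_n) (j : 'I_N), 0 <= a i j) ->
  bijective h ->
  (forall k k' : 'I_(n * N), val k' = (val k).+1 -> (val k' < l * N)%N ->
      a (h k').1 (h k').2 <= a (h k).1 (h k).2) ->
  (forall k : 'I_(n * N), (l * N <= val k)%N -> a (h k).1 (h k).2 = 0) ->
  (forall k : 'I_(n * N),
      atil (h k).1 (h k).2 =
        if (val k < l * N)%N then
          (\sum_(k0 : 'I_(n * N) | (val k0 < l * N)%N) a (h k0).1 (h k0).2)
            / (l * N)%:R
        else 0) ->
  Exp G (Sfun l atil) <= (8 + 16 * CG) * Exp G (Sfun l a).
Proof.
move=> G0 C1 Hp1 Hp2 l1 ln a0 [hinv hK hinvK] Hmono Hzero Htil.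
have hbij : bijective h by exists hinv.
set K : R := #|G|%:R.
have K0 : 0 < K by rewrite ltr0n card_gt0.
have [g0 g0G] : exists g, g \in G by apply/set0Pn.
have n0 : (0 < n)%N by apply: leq_trans l1 ln.
have N0 : (0 < N)%N by apply: leq_ltn_trans (leq0n _) (ltn_ord (g0 (Ordinal n0))).
have NR : 0 < N%:R :> R by rewrite ltr0n.
have lR : 1 <= l%:R :> R by rewrite ler1n.
pose T (i : 'I_n) (j : 'I_N) : bool := (val (hinv (i, j)) < l * N)%N.
have F1 : forall i j, ~~ T i j -> a i j = 0.
  move=> i j; rewrite /T -leqNgt => H; have := Hzero _ H; by rewrite hinvK.
have Fsum : forall F : 'I_n -> 'I_N -> R,
    \sum_i \sum_j F i j = \sum_k F (h k).1 (h k).2.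
  move=> F; rewrite pair_big /=.
  by rewrite (reindex h) //; apply: onW_bij.
have lNnN : (l * N <= n * N)%N by rewrite leq_mul2r ln orbT.
have Fcnt : forall c : R, \sum_(k : 'I_(n * N) | (val k < l * N)%N) c = c * (l * N)%:R.
  move=> c; rewrite -(big_ord_widen _ (fun _ => c) lNnN) sumr_const card_ord.
  by rewrite mulr_natr.
have FT : \sum_i \sum_j ((T i j)%:R : R) = (l * N)%:R.
  rewrite Fsum big_mkcond /=.
  rewrite -[RHS]mul1r -Fcnt [RHS]big_mkcond /=; apply: eq_bigr => k _.
  by rewrite /T -surjective_pairing hK; case: ifP.

set M := \sum_i \sum_j a i j.
have M0 : 0 <= M by apply: sumr_ge0 => i _; apply: sumr_ge0 => j _.
have FM : \sum_(k : 'I_(n * N) | (val k < l * N)%N) a (h k).1 (h k).2 = M.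
  rewrite /M Fsum [RHS](bigID (fun k : 'I_(n * N) => (val k < l * N)%N)) /=.
  rewrite [X in _ = _ + X]big1 ?addr0 // => k; rewrite -leqNgt; exact: Hzero.
have lNR : 0 < (l * N)%:R :> R by rewrite ltr0n muln_gt0 N0 andbT.
have FMt : \sum_i \sum_j atil i j = M.
  rewrite Fsum; under eq_bigr do rewrite Htil FM.
  rewrite -big_mkcond /= Fcnt mulfVK //; by rewrite gt_eqF.
have at0 : forall i j, 0 <= atil i j.
  move=> i j; have := Htil (hinv (i, j)); rewrite hinvK /= => ->.
  case: ifP => _ //; rewrite FM; apply: divr_ge0; [exact: M0 | exact: ltW lNR].
have HG1 : forall i j, \sum_(g in G) ((g i == j)%:R : R) = K / N%:R.
  move=> i j; have := Hp1 i j; rewrite /Prob sum_ind => H.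
  by rewrite -(divfK (lt0r_neq0 K0) (_%:R)) H mul1r mulrC.
have HG2 : forall i1 i2 j1 j2, (i1, j1) != (i2, j2) ->
    \sum_(g in G) (((g i1 == j1) && (g i2 == j2))%:R : R) <= K * CG / N%:R ^+ 2.
  move=> i1 i2 j1 j2 Hne; have := Hp2 i1 i2 j1 j2 Hne; rewrite /Prob sum_ind => H.
  rewrite -(divfK (lt0r_neq0 K0) (_%:R)) mulrC -mulrA.
  by apply: ler_wpM2l; [exact: ltW K0 | exact: H].

have EX : forall b : 'M[R]_(n, N),
    \sum_(g in G) \sum_i b i (g i) = K / N%:R * \sum_i \sum_j b i j.
  move=> b.
  have -> : \sum_(g in G) \sum_i b i (g i)
      = \sum_(g in G) \sum_i \sum_j b i j * (g i == j)%:R.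
    by apply: eq_bigr => g _; apply: eq_bigr => i _; apply: delta_sum.
  rewrite exchange_big mulr_sumr; apply: eq_bigr => i _.
  rewrite exchange_big mulr_sumr; apply: eq_bigr => j _.
  by rewrite -mulr_sumr HG1 mulrC.
have USat : \sum_(g in G) Sfun l atil g <= K / N%:R * M.
  rewrite -FMt -EX; apply: ler_sum => g _; rewrite /Sfun -sum_map_enum.
  by apply: topsum_ub; apply/allP => x /mapP [i _ ->]; exact: at0.

set c : R := 1 + CG.
have c2 : 2 <= c by rewrite /c; lra.
pose X (g : {ffun 'I_n -> 'I_N}) := \sum_i a i (g i).
pose Zr (g : {ffun 'I_n -> 'I_N}) := \sum_i ((T i (g i))%:R : R).
have X0 : forall g, 0 <= X g by move=> g; apply: sumr_ge0 => i _.
have PW : forall g, 2 * c * l%:R * X g - X g * Zr g <= c ^+ 2 * l%:R * Sfun l a g.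
  move=> g.
  set z := count (fun i => T i (g i)) (enum 'I_n).
  have Zz : Zr g = z%:R by rewrite count_enum_sum.
  have := @topsum_lb R l z [seq a i (g i) | i <- enum 'I_n].
  rewrite sum_map_enum -/(X g) -/(Sfun l a g) Zz.
  have Hall : all (fun x => 0 <= x) [seq a i (g i) | i <- enum 'I_n].
    by apply/allP => x /mapP [i _ ->].
  have Hcnt : (count (fun x : R => (0 < x)%R) [seq a i (g i) | i <- enum 'I_n] <= z)%N.
    rewrite count_map; apply: sub_count => i /= Hpos.
    apply/negPn/negP => HT; move: Hpos; by rewrite F1 // ltxx.
  move=> /(_ Hall Hcnt).
  case: (leqP z l) => Hz.
    move=> H.
    have XS : X g <= Sfun l a g by rewrite -(ler_pM2l (lt_le_trans ltr01 lR)).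
    have z0 : 0 <= z%:R :> R by [].
    have L0 : 0 <= l%:R :> R by [].
    have hA : 0 <= c ^+ 2 * l%:R * (Sfun l a g - X g).
      by apply: mulr_ge0; [apply: mulr_ge0; [apply: sqr_ge0|] | rewrite subr_ge0].
    have hB : 0 <= c * l%:R * X g * (c - 2).
      by apply: mulr_ge0; [apply: mulr_ge0; [apply: mulr_ge0; [lra|]|apply: X0] | lra].
    have hC : 0 <= X g * z%:R by apply: mulr_ge0; [apply: X0|].
    rewrite -subr_ge0.
    have -> : c ^+ 2 * l%:R * Sfun l a g - (2 * c * l%:R * X g - X g * z%:R)
      = c ^+ 2 * l%:R * (Sfun l a g - X g) + c * l%:R * X g * (c - 2) + X g * z%:R by ring.
    by rewrite !addr_ge0.
  move=> H.
  have Zp : 0 < z%:R :> R by rewrite ltr0n (leq_ltn_trans (leq0n l) Hz).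
  rewrite -subr_ge0 -(pmulr_rge0 _ Zp).
  have -> : z%:R * (c ^+ 2 * l%:R * Sfun l a g - (2 * c * l%:R * X g - X g * z%:R))
    = c ^+ 2 * l%:R * (z%:R * Sfun l a g - l%:R * X g) + X g * (c * l%:R - z%:R) ^+ 2 by ring.
  apply: addr_ge0; last by apply: mulr_ge0; [apply: X0 | apply: sqr_ge0].
  by apply: mulr_ge0; [apply: mulr_ge0; [apply: sqr_ge0|] | rewrite subr_ge0].

have Zdelta : forall g, Zr g = \sum_i \sum_j (T i j)%:R * (g i == j)%:R.
  by move=> g; apply: eq_bigr => i _; exact: (delta_sum (fun j => (T i j)%:R) (g i)).
have Xdelta : forall g, X g = \sum_i \sum_j a i j * (g i == j)%:R.
  by move=> g; apply: eq_bigr => i _; exact: (delta_sum (a i) (g i)).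
have XZe : forall g, X g * Zr g = \sum_i \sum_j \sum_i' \sum_j'
     a i j * ((T i' j')%:R * ((g i == j) && (g i' == j'))%:R).
  move=> g; rewrite Xdelta Zdelta mulr_suml; apply: eq_bigr => i _.
  rewrite mulr_suml; apply: eq_bigr => j _.
  rewrite mulr_sumr; apply: eq_bigr => i' _.
  rewrite mulr_sumr; apply: eq_bigr => j' _.
  by case: (g i == j); case: (g i' == j'); rewrite /= ?mulr0 ?mul0r ?mulr1 ?mul1r.
pose W i j := \sum_i' \sum_j' (T i' j')%:R *
    \sum_(g in G) (((g i == j) && (g i' == j'))%:R : R).
have SXZ : \sum_(g in G) X g * Zr g = \sum_i \sum_j a i j * W i j.
  under eq_bigr do rewrite XZe.
  rewrite exchange_big; apply: eq_bigr => i _.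
  rewrite exchange_big; apply: eq_bigr => j _.
  rewrite mulr_sumr exchange_big; apply: eq_bigr => i' _.
  rewrite mulr_sumr exchange_big; apply: eq_bigr => j' _.
  by rewrite !mulr_sumr.

set B := K / N%:R + (l * N)%:R * (K * CG / N%:R ^+ 2).
have KN0 : 0 <= K / N%:R by apply: divr_ge0; [exact: ltW | exact: ltW].
have KC0 : 0 <= K * CG / N%:R ^+ 2.
  apply: divr_ge0; [apply: mulr_ge0; [exact: ltW | lra] | apply: sqr_ge0].
have Wb : forall i j, W i j <= B.
  move=> i j.
  have H1 : W i j <= \sum_i' \sum_j' ((T i' j')%:R * (K * CG / N%:R ^+ 2)
                 + ((i' == i) && (j' == j))%:R * (K / N%:R)).
    apply: ler_sum => i' _; apply: ler_sum => j' _.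
    case: (eqVneq (i', j') (i, j)) => [[-> ->] | Hne].
      have t0 : 0 <= (T i j)%:R :> R by [].
      have t1 : (T i j)%:R <= 1 :> R by case: (T i j).
      rewrite !eqxx /= mul1r.
      under eq_bigr do rewrite andbb.
      rewrite HG1.
      have := mulr_ge0 t0 KC0.
      have : (T i j)%:R * (K / N%:R) <= K / N%:R by rewrite ler_piMl.
      lra.
    have -> : ((i' == i) && (j' == j)) = false.
      by apply/negbTE; move: Hne; rewrite xpair_eqE.
    rewrite mul0r addr0; apply: ler_wpM2l => //.
    by apply: HG2; rewrite eq_sym.
  apply: (le_trans H1).
  rewrite /B addrC.
  have -> : \sum_i' \sum_j' ((T i' j')%:R * (K * CG / N%:R ^+ 2)
                 + ((i' == i) && (j' == j))%:R * (K / N%:R))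
      = \sum_i' \sum_j' (T i' j')%:R * (K * CG / N%:R ^+ 2)
        + \sum_i' \sum_j' ((i' == i) && (j' == j))%:R * (K / N%:R).
    by rewrite -big_split /=; apply: eq_bigr => i' _; rewrite big_split.
  apply: lerD.
    under eq_bigr do rewrite -mulr_suml.
    by rewrite -mulr_suml FT.
  rewrite (bigD1 i) //= [X in _ + X]big1 ?addr0; last first.
    by move=> i' /negbTE Hi; apply: big1 => j' _; rewrite Hi /= mul0r.
  rewrite (bigD1 j) //= [X in _ + X]big1 ?addr0; last first.
    by move=> j' /negbTE Hj; rewrite eqxx Hj /= mul0r.
  by rewrite !eqxx mul1r.

have LB : \sum_(g in G) X g * Zr g <= M * B.
  rewrite SXZ /M mulr_suml; apply: ler_sum => i _; rewrite mulr_suml.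
  by apply: ler_sum => j _; apply: ler_wpM2l; [apply: a0 | apply: Wb].
set Q := K / N%:R * M.
have Q0 : 0 <= Q by apply: mulr_ge0.
have MB : M * B = Q + l%:R * CG * Q.
  rewrite /B /Q natrM; field; by rewrite gt_eqF.
set S := \sum_(g in G) Sfun l a g.
have LS : 2 * c * l%:R * Q - (Q + l%:R * CG * Q) <= c ^+ 2 * l%:R * S.
  have H : \sum_(g in G) (2 * c * l%:R * X g - X g * Zr g)
      <= \sum_(g in G) c ^+ 2 * l%:R * Sfun l a g by apply: ler_sum => g _; apply: PW.
  rewrite -mulr_sumr sumrB -mulr_sumr (EX a) -/M -/Q in H.
  apply: le_trans H; rewrite lerD2l lerN2 -MB; exact: LB.
have cS : Q <= c * S.
  have cl0 : 0 < c * l%:R by apply: mulr_gt0; lra.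
  rewrite -(ler_pM2l cl0).
  have e1 : c * l%:R * Q <= 2 * c * l%:R * Q - (Q + l%:R * CG * Q).
    rewrite -subr_ge0.
    have -> : 2 * c * l%:R * Q - (Q + l%:R * CG * Q) - c * l%:R * Q
       = (l%:R - 1) * Q by rewrite /c; ring.
    by apply: mulr_ge0 => //; lra.
  have -> : c * l%:R * (c * S) = c ^+ 2 * l%:R * S by ring.
  exact: (le_trans e1 LS).
have S0 : 0 <= S.
  have c0 : 0 < c by lra.
  by rewrite -(pmulr_rge0 _ c0); apply: le_trans cS.
rewrite /Exp mulrA ler_pM2r ?invr_gt0 //.
apply: (le_trans USat); rewrite -/Q; apply: (le_trans cS).
apply: ler_wpM2r => //; rewrite /c; lra.
Qed.
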